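(* Let $n\ge2$, let $M$ be a nonderogatory $d\times d$ matrix with minimal polynomial $\mathbf p$, and let $\mathcal B$ be a generic maximal subalgebra of $\mathcal T_{n,d}[\mathcal P(M)]$. For $B\in\mathcal B$ write $B_j=\mathbf b_j(M)$ with $\mathbf b_j\in\mathbb C[X]$. Then: (i) for each $j\in\{\pm1,\dots,\pm(n-1)\}$ there exists $B\in\mathcal B$ with $B_j\neq0$; (ii) letting $\mathbf s_j$ be the (monic) greatest common divisor of $\mathbf p$ and all the $\mathbf b_j$, $B\in\mathcal B$, we have $\mathbf s_1=\dots=\mathbf s_{n-1}=:\mathbf s_+$ and $\mathbf s_{-1}=\dots=\mathbf s_{-(n-1)}=:\mathbf s_-$; consequently every $B\in\mathcal B$ can be written as $B_j=\mathbf s_+(M)\tilde{\mathbf b}_j(M)$ for $j\ge1$ and $B_j=\mathbf s_-(M)\tilde{\mathbf b}_j(M)$ for $j\le-1$, with $\tilde{\mathbf b}_j\in\mathbb C[X]$; (iii) there exists $A\in\mathcal B$ for which the polynomials $\tilde{\mathbf a}_j$ in (ii) can be chosen relatively prime to $\mathbf p$ for every $j=\pm1,\dots,\pm(n-1)$; (iv) $\mathbf s_+\mathbf s_-$ divides $\mathbf p$.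
   Context: A nonderogatory matrix is one whose minimal polynomial equals its characteristic polynomial; $\mathcal P(M)$ is the algebra of polynomials in $M$. $\mathcal T_{n,d}[\mathcal P(M)]$ is the set of $n\times n$ block Toeplitz matrices $(B_{i-j})_{i,j=0}^{n-1}$ with all $B_m\in\mathcal P(M)$. A maximal subalgebra of $\mathcal T_{n,d}[\mathcal P(M)]$ is a subalgebra (linear subspace closed under multiplication) contained in it and maximal under inclusion among such. Let $\mathfrak B_u$ be the set of $B\in\mathcal T_{n,d}[\mathcal P(M)]$ with $B_i=0$ for all $i\ge1$ (upper triangular) and $\mathfrak B_l$ the set with $B_i=0$ for all $i\le-1$ (lower triangular). An algebra is called generic if it is contained neither in $\mathfrak B_u$ nor in $\mathfrak B_l$. *)

(* Defs.v *)
From HB Require Import structures.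
From mathcomp Require Import all_boot all_order all_algebra.
Set Implicit Arguments. Unset Strict Implicit. Unset Printing Implicit Defensive.
Import Order.TTheory GRing.Theory Num.Theory.
Local Open Scope ring_scope.

Section BlockToeplitz.
Variables (C : fieldType) (d' n : nat).
Local Notation d := d'.+1.
Local Notation BM := 'M['M[C]_d]_n.

Definition nonderogatory (M : 'M[C]_d) : Prop := mxminpoly M = char_poly M.

Definition inPM (M : 'M[C]_d) (X : 'M[C]_d) : Prop :=
  exists q : {poly C}, X = horner_mx M q.

Definition toeplitzPM (M : 'M[C]_d) (B : BM) : Prop :=
  exists b : int -> 'M[C]_d, (forall m, inPM M (b m)) /\
    forall i j : 'I_n, B i j = b ((nat_of_ord i)%:Z - (nat_of_ord j)%:Z).

(* the block B_m, i.e. the (i,j) block of B for some i,j with i - j = m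
   (0 if there is no such pair) *)
Definition tblock (B : BM) (m : int) : 'M[C]_d :=
  if [pick ij : 'I_n * 'I_n | (nat_of_ord ij.1)%:Z - (nat_of_ord ij.2)%:Z == m]
  is Some ij then B ij.1 ij.2 else 0.

Definition bscale (c : C) (B : BM) : BM := map_mx (fun X => c *: X) B.

Definition subalgebra (S : BM -> Prop) : Prop :=
  [/\ S 0,
      (forall A B, S A -> S B -> S (A + B)),
      (forall c A, S A -> S (bscale c A)) &
      (forall A B, S A -> S B -> S (A *m B))].

Definition maximal_subalgebra (M : 'M[C]_d) (S : BM -> Prop) : Prop :=
  [/\ subalgebra S,
      (forall B, S B -> toeplitzPM M B) &
      (forall S' : BM -> Prop, subalgebra S' -> (forall B, S' B -> toeplitzPM M B) ->
         (forall B, S B -> S' B) -> forall B, S' B -> S B)].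

Definition upperB (B : BM) : Prop := forall i : int, 1 <= i -> tblock B i = 0.
Definition lowerB (B : BM) : Prop := forall i : int, i <= -1 -> tblock B i = 0.

Definition generic (S : BM -> Prop) : Prop :=
  ~ (forall B, S B -> upperB B) /\ ~ (forall B, S B -> lowerB B).

Definition is_sgcd (M : 'M[C]_d) (S : BM -> Prop) (j : int) (s : {poly C}) : Prop :=
  [/\ s \is monic, s %| mxminpoly M,
      (forall B b, S B -> horner_mx M b = tblock B j -> s %| b) &
      (forall t : {poly C}, t %| mxminpoly M ->
         (forall B b, S B -> horner_mx M b = tblock B j -> t %| b) -> t %| s)].

End BlockToeplitz.

(* Main.v *)
Require Import Defs.
From HB Require Import structures.
From mathcomp Require Import all_boot all_order all_algebra.
From mathcomp Require Import zify ring.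
From Stdlib Require Import Classical.
Import Order.TTheory GRing.Theory Num.Theory.
Local Open Scope ring_scope.
Set Implicit Arguments. Unset Strict Implicit. Unset Printing Implicit Defensive.

Lemma rng_pos (n k : nat) : (0 < k < n)%N -> (- n%:Z < k%:Z) && (k%:Z < n%:Z).
Proof. move=> h; apply/andP; split; lia. Qed.
Lemma rng_neg (n k : nat) : (0 < k < n)%N -> (- n%:Z < k%:Z - n%:Z) && (k%:Z - n%:Z < n%:Z).
Proof. move=> h; apply/andP; split; lia. Qed.
Lemma rng_pos2 (n k : nat) : (0 < k < n)%N -> (0 < k%:Z) && (k%:Z < n%:Z).
Proof. move=> h; apply/andP; split; lia. Qed.
Lemma rng_neg2 (n k : nat) : (0 < k < n)%N -> ((0 < k%:Z - n%:Z) && (k%:Z - n%:Z < n%:Z)) = false.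
Proof. move=> h; apply/negbTE/negP => /andP[]; lia. Qed.
Lemma rng_neg3 (n k : nat) : (0 < k < n)%N -> (- n%:Z < k%:Z - n%:Z) && (k%:Z - n%:Z < 0).
Proof. move=> h; apply/andP; split; lia. Qed.
Lemma jp1 (n : nat) (j : int) : 1 <= j < n%:Z -> (- n%:Z < j) && (j < n%:Z).
Proof. move=> /andP [h1 h2]; apply/andP; split; lia. Qed.
Lemma jp2 (n : nat) (j : int) : 1 <= j < n%:Z -> (0 < j) && (j < n%:Z).
Proof. move=> /andP [h1 h2]; apply/andP; split; lia. Qed.
Lemma jp3 (n : nat) (j : int) : 1 <= j < n%:Z -> (0 < absz j < n)%N /\ (absz j)%:Z = j.
Proof. move=> /andP [h1 h2]; split; [apply/andP; split|]; lia. Qed.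
Lemma jm1 (n : nat) (j : int) : - n%:Z < j <= -1 -> (- n%:Z < j) && (j < n%:Z).
Proof. move=> /andP [h1 h2]; apply/andP; split; lia. Qed.
Lemma jm2 (n : nat) (j : int) : - n%:Z < j <= -1 -> ((0 < j) && (j < n%:Z)) = false.
Proof. move=> /andP [h1 h2]; apply/negbTE/negP => /andP[]; lia. Qed.
Lemma jm2' (n : nat) (j : int) : - n%:Z < j <= -1 -> (- n%:Z < j) && (j < 0).
Proof. move=> /andP [h1 h2]; apply/andP; split; lia. Qed.
Lemma jm3 (n : nat) (j : int) : - n%:Z < j <= -1 ->
  (0 < absz (j + n%:Z)%R < n)%N /\ (absz (j + n%:Z))%:Z - n%:Z = j.
Proof. move=> /andP [h1 h2]; split; [apply/andP; split|]; lia. Qed.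
Lemma jabs (n : nat) (j : int) : 1 <= `|j| < n%:Z ->
  (1 <= j < n%:Z) \/ (- n%:Z < j <= -1).
Proof.
move=> /andP [h1 h2]; case: (lerP 0 j) => hj.
  by left; rewrite ger0_norm // in h1 h2; apply/andP; split.
by right; rewrite ltr0_norm // in h1 h2; apply/andP; split; lia.
Qed.

Lemma monic_normalize (F : fieldType) (c : {poly F}) :
  c != 0 -> (lead_coef c)^-1 *: c \is monic.
Proof.
move=> c0; rewrite monicE lead_coefZ mulVf //.
by rewrite lead_coef_eq0.
Qed.

Lemma ideal_gen (F : fieldType) (P : {poly F} -> Prop) (p : {poly F}) :
  p != 0 -> P p -> (forall x y, P x -> P y -> P (x + y)) ->
  (forall q x, P x -> P (q * x)) ->
  exists s, [/\ s \is monic, P s & forall x, P x -> s %| x].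
Proof.
move=> p0 Pp PD PM.
suff: forall N c, P c -> c != 0 -> (size c <= N)%N ->
  exists s, [/\ s \is monic, P s & forall x, P x -> s %| x].
  by move/(_ (size p) p Pp p0 (leqnn _)).
elim=> [|N IH] c Pc c0 hs.
  by move: hs; rewrite leqn0 size_poly_eq0 (negbTE c0).
have [H|H] := classic (forall x, P x -> c %| x).
  exists ((lead_coef c)^-1 *: c); split.
  - exact: monic_normalize.
  - by rewrite -mul_polyC; apply: PM.
  - move=> x Px; rewrite dvdpZl; first exact: H.
    by rewrite invr_eq0 lead_coef_eq0.
have [x [Px Hx]] : exists x, P x /\ ~ c %| x.
  apply: NNPP => H1; apply: H => x Px; apply: NNPP => H2; apply: H1.
  by exists x.
apply: (IH (x %% c)).
- have -> : x %% c = x + (- (x %/ c)) * c by rewrite {2}(divp_eq x c); ring.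
  by apply: PD => //; apply: PM.
- by apply/eqP => /modp_eq0P.
- have := ltn_modp x c; rewrite c0 => h; rewrite -ltnS; exact: leq_trans h hs.
Qed.

Lemma coprime_trans (F : fieldType) (e g a X : {poly F}) :
  coprimep e g -> g %| e - a * X -> coprimep a g.
Proof.
move=> /Bezout_coprimepP [[u v] /= Huv] hd.
apply/Bezout_coprimepP; exists (u * X, u * ((e - a * X) %/ g) + v) => /=.
have -> : u * X * a + (u * ((e - a * X) %/ g) + v) * g
          = u * (a * X + (e - a * X) %/ g * g) + v * g by ring.
rewrite divpK //.
by have -> : a * X + (e - a * X) = e by ring.
Qed.

Lemma choose_c (C : numClosedFieldType) (a g p : {poly C}) :
  p != 0 -> coprimep a g -> exists c : C, coprimep (a + c%:P * g) p.
Proof.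
move=> p0 cag; have [rs Hp] := closed_field_poly_normal p.
pose bad := [seq - a.[z] / g.[z] | z <- rs].
pose c : C := 1 + \sum_(b <- bad) `|b|.
have cbad : forall b, b \in bad -> c != b.
  move=> b hb; apply/eqP => cb.
  have h1 : `|b| <= \sum_(b <- bad) `|b|.
    rewrite (big_rem b) //= lerDl; apply: sumr_ge0 => i _; exact: normr_ge0.
  have h2 : 0 <= \sum_(b <- bad) `|b| by apply: sumr_ge0 => i _; exact: normr_ge0.
  have : `|c| = c by rewrite ger0_norm // /c addr_ge0.
  rewrite cb => e; move: h1; rewrite e -cb /c.
  by rewrite -[X in _ <= X]add0r lerD2r ler10.
exists c; apply: contraT => ncop.
have : size (gcdp (a + c%:P * g) p) != 1%N by rewrite coprimep_def in ncop.
case/closed_rootP => z; rewrite root_gcd => /andP [r1 r2].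
have zin : z \in rs.
  move: r2; rewrite {1}Hp rootZ ?root_prod_XsubC //.
  by rewrite lead_coef_eq0.
have [g0|g0] := eqVneq g.[z] 0.
  have rg : root g z by rewrite /root g0.
  have := coprimep_root (x:=z) (p:=g) (q:=a); rewrite coprimep_sym => /(_ cag rg).
  by move: r1; rewrite /root !hornerE g0 mulr0 addr0 => ->.
move: r1; rewrite /root !hornerE => /eqP hz.
have : c \in bad.
  apply/mapP; exists z => //.
  apply: (mulIf g0); rewrite -mulrA mulVf // mulr1.
  by move/eqP: hz; rewrite addrC addr_eq0 => /eqP.
by move/cbad; rewrite eqxx.
Qed.

Section Toep.
Variables (C : numClosedFieldType) (d' n' : nat) (M : 'M[C]_d'.+1).
Local Notation d := d'.+1.
Local Notation n := n'.+1.
Local Notation BM := 'M['M[C]_d]_n.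
Local Notation hM := (horner_mx M).

Lemma inPM0 : inPM M 0. Proof. by exists 0; rewrite rmorph0. Qed.
Lemma inPMD X Y : inPM M X -> inPM M Y -> inPM M (X + Y).
Proof. by move=> [p ->] [q ->]; exists (p + q); rewrite rmorphD. Qed.
Lemma inPMM X Y : inPM M X -> inPM M Y -> inPM M (X * Y).
Proof. by move=> [p ->] [q ->]; exists (p * q); rewrite rmorphM. Qed.
Lemma inPMN X : inPM M X -> inPM M (- X).
Proof. by move=> [p ->]; exists (- p); rewrite rmorphN. Qed.
Lemma inPM_sum (I : Type) (r : seq I) (F : I -> 'M[C]_d) :
  (forall i, inPM M (F i)) -> inPM M (\sum_(i <- r) F i).
Proof.
move=> H; elim: r => [|x r IH]; first by rewrite big_nil; exact: inPM0.
by rewrite big_cons; apply: inPMD.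
Qed.
Lemma inPM_comm X Y : inPM M X -> inPM M Y -> X * Y = Y * X.
Proof. by move=> [p ->] [q ->]; apply: comm_horner_mx2. Qed.
Lemma inPM_h p : inPM M (hM p). Proof. by exists p. Qed.

Definition conv (a b : int -> 'M[C]_d) (i j : int) :=
  \sum_(t < n) a (i - t%:Z) * b (t%:Z - j).

Lemma conv_shift a b i j :
  conv a b (i + 1) (j + 1) + a (i - n'%:Z) * b (n'%:Z - j) =
  conv a b i j + a (i + 1) * b (- j - 1).
Proof.
rewrite /conv big_ord_recl big_ord_recr /=.
have E : \sum_(t < n') a (i + 1 - (bump 0 t)%:Z) * b ((bump 0 t)%:Z - (j + 1)) =
         \sum_(t < n') a (i - t%:Z) * b (t%:Z - j).
  apply: eq_bigr => t _; rewrite /bump /=; congr (a _ * b _); lia.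
rewrite E.
have -> : i + 1 - 0%N%:Z = i + 1 by lia.
have -> : 0%N%:Z - (j + 1) = - j - 1 by lia.
by rewrite [RHS]addrC addrA.
Qed.

Lemma conv_inv a b :
  (forall k l : nat, (0 < k < n)%N -> (0 < l < n)%N ->
     a k%:Z * b (l%:Z - n%:Z) = a (k%:Z - n%:Z) * b l%:Z) ->
  forall m i j : nat, (i + m < n)%N -> (j + m < n)%N ->
  conv a b (i + m)%N%:Z (j + m)%N%:Z = conv a b i j.
Proof.
move=> H; elim=> [|m IH] i j hi hj; first by rewrite !addn0.
have e1 : (i + m.+1)%N%:Z = (i + m)%N%:Z + 1 by lia.
have e2 : (j + m.+1)%N%:Z = (j + m)%N%:Z + 1 by lia.
have IH' := IH i j ltac:(lia) ltac:(lia).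
rewrite e1 e2 -IH'.
apply: (addIr (a ((i + m)%N%:Z - n'%:Z) * b (n'%:Z - (j + m)%N%:Z))).
rewrite conv_shift; congr (_ + _).
have := H (i + m).+1 (n' - (j + m))%N.
have -> : (i + m).+1%:Z = (i + m)%N%:Z + 1 by lia.
have -> : (n' - (j + m))%N%:Z - n%:Z = - (j + m)%N%:Z - 1 by lia.
have -> : (i + m)%N%:Z + 1 - n%:Z = (i + m)%N%:Z - n'%:Z by lia.
have -> : (n' - (j + m))%N%:Z = n'%:Z - (j + m)%N%:Z by lia.
move=> ->; first by [].
  by apply/andP; split; lia.
by apply/andP; split; lia.
Qed.

Definition cfun a b (m : int) : 'M[C]_d :=
  if (0 <= m) then conv a b m 0 else conv a b 0 (- m).

Lemma conv_toep a b :
  (forall k l : nat, (0 < k < n)%N -> (0 < l < n)%N ->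
     a k%:Z * b (l%:Z - n%:Z) = a (k%:Z - n%:Z) * b l%:Z) ->
  forall i j : nat, (i < n)%N -> (j < n)%N ->
  conv a b i j = cfun a b (i%:Z - j%:Z).
Proof.
move=> H i j hi hj; rewrite /cfun; case: (leqP j i) => hij.
  have E := conv_inv H (m:=j) (i:=i - j) (j:=0) ltac:(lia) ltac:(lia).
  rewrite add0n subnK // in E.
  rewrite E; case: ifP => h; last lia.
  congr conv; lia.
have E := conv_inv H (m:=i) (i:=0) (j:=j - i) ltac:(lia) ltac:(lia).
rewrite add0n subnK in E; last lia.
rewrite E; case: ifP => h; first lia.
congr conv; lia.
Qed.

Lemma tblockE (B : BM) (b : int -> 'M[C]_d) :
  (forall i j : 'I_n, B i j = b ((nat_of_ord i)%:Z - (nat_of_ord j)%:Z)) ->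
  forall m, tblock B m = if (- n%:Z < m) && (m < n%:Z) then b m else 0.
Proof.
move=> HB m; rewrite /tblock; case: pickP => [[i j] /= /eqP Hm | H].
  rewrite HB Hm; case: ifP => // /negP []; apply/andP.
  have := ltn_ord i; have := ltn_ord j; split; lia.
case: ifP => // /andP [h1 h2]; exfalso.
case: m h1 h2 H => k h1 h2 H.
  have hk : (k < n)%N by lia.
  by have := H (Ordinal hk, ord0) => /=; rewrite subr0 eqxx.
have hk : (k.+1 < n)%N by rewrite NegzE in h1; lia.
by have := H (ord0, Ordinal hk) => /=; rewrite NegzE add0r eqxx.
Qed.

End Toep.

Section Main.
Variables (C : numClosedFieldType) (d' n' : nat) (M : 'M[C]_d'.+1)
  (S : 'M['M[C]_d'.+1]_n'.+1 -> Prop).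
Hypothesis HS : maximal_subalgebra M S.
Hypothesis Hgen : generic S.
Hypothesis Hn : (0 < n')%N.
Local Notation d := d'.+1.
Local Notation n := n'.+1.
Local Notation BM := 'M['M[C]_d]_n.
Local Notation hM := (horner_mx M).
Local Notation p := (mxminpoly M).

Lemma hMM a b : hM (a * b) = hM a * hM b. Proof. exact: rmorphM. Qed.
Lemma hMD a b : hM (a + b) = hM a + hM b. Proof. exact: rmorphD. Qed.
Lemma hMB a b : hM (a - b) = hM a - hM b. Proof. exact: rmorphB. Qed.
Lemma hM0 : hM 0 = 0. Proof. exact: rmorph0. Qed.
Lemma hMp : hM p = 0. Proof. exact: mx_root_minpoly. Qed.
Lemma hM_eq0 a : (hM a = 0) <-> p %| a.
Proof. by split; [apply: mxminpoly_min | move/mxminpoly_minP]. Qed.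

Lemma S0 : S 0. Proof. by case: HS => -[]. Qed.
Lemma SM A B : S A -> S B -> S (A *m B). Proof. case: HS => -[] _ _ _ H _ _; exact: H. Qed.
Lemma Stoep B : S B -> toeplitzPM M B. Proof. case: HS => _ H _; exact: H. Qed.

Lemma mulE (A B : BM) a b :
  (forall i j : 'I_n, A i j = a ((nat_of_ord i)%:Z - (nat_of_ord j)%:Z)) ->
  (forall i j : 'I_n, B i j = b ((nat_of_ord i)%:Z - (nat_of_ord j)%:Z)) ->
  forall i j : 'I_n, (A *m B) i j = conv n' a b i j.
Proof.
move=> HA HB i j; rewrite mxE /conv; apply: eq_bigr => t _; by rewrite HA HB.
Qed.

Lemma entry_nat (X : BM) c :
  (forall i j : 'I_n, X i j = c ((nat_of_ord i)%:Z - (nat_of_ord j)%:Z)) ->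
  forall (x y : nat), (x < n)%N -> (y < n)%N -> X (inord x) (inord y) = c (x%:Z - y%:Z).
Proof. by move=> H x y hx hy; rewrite H !inordK. Qed.

Lemma starS A B : S A -> S B -> forall k l : nat, (0 < k < n)%N -> (0 < l < n)%N ->
  tblock A k%:Z * tblock B (l%:Z - n%:Z) = tblock A (k%:Z - n%:Z) * tblock B l%:Z.
Proof.
move=> SA SB k l hk hl.
have [a [_ Ha]] := Stoep SA; have [b [_ Hb]] := Stoep SB.
have [c [_ Hc]] := Stoep (SM SA SB).
rewrite !(tblockE Ha) !(tblockE Hb).
have r1 : (- n%:Z < k%:Z) && (k%:Z < n%:Z) by apply/andP; split; lia.
have r2 : (- n%:Z < l%:Z - n%:Z) && (l%:Z - n%:Z < n%:Z) by apply/andP; split; lia.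
have r3 : (- n%:Z < k%:Z - n%:Z) && (k%:Z - n%:Z < n%:Z) by apply/andP; split; lia.
have r4 : (- n%:Z < l%:Z) && (l%:Z < n%:Z) by apply/andP; split; lia.
rewrite r1 r2 r3 r4.
have HM := mulE Ha Hb.
have cv : forall x y : nat, (x < n)%N -> (y < n)%N -> conv n' a b x y = c (x%:Z - y%:Z).
  move=> x y hx hy; rewrite -(entry_nat Hc) // HM.
  by rewrite !inordK.
have := conv_shift n' a b (k.-1)%:Z (n' - l)%N%:Z.
have -> : (k.-1)%:Z + 1 = k.+1.-1%:Z by lia.
have -> : (n' - l)%N%:Z + 1 = (n' - l).+1%:Z by lia.
rewrite cv ?cv; try lia.
have -> : k.+1.-1%:Z - (n' - l).+1%:Z = (k.-1)%:Z - (n' - l)%N%:Z by lia.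
move/addrI.
have -> : (k.-1)%:Z - n'%:Z = k%:Z - n%:Z by lia.
have -> : n'%:Z - (n' - l)%N%:Z = l%:Z by lia.
have -> : k.+1.-1%:Z = k%:Z by lia.
have -> : - (n' - l)%N%:Z - 1 = l%:Z - n%:Z by lia.
by move=> ->.
Qed.


Definition Iup (c : {poly C}) :=
  exists B, S B /\ exists k : nat, (0 < k < n)%N /\ hM c = tblock B k%:Z.
Definition Idn (c : {poly C}) :=
  exists B, S B /\ exists k : nat, (0 < k < n)%N /\ hM c = tblock B (k%:Z - n%:Z).
Definition Igen (I : {poly C} -> Prop) (c : {poly C}) :=
  exists s : seq ({poly C} * {poly C}),
    (forall x, x \in s -> I x.2) /\ c = \sum_(x <- s) x.1 * x.2.

Lemma tblock0 m : tblock (0 : BM) m = 0.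
Proof.
by rewrite (tblockE (b := fun _ => 0)) ?if_same // => i j; rewrite mxE.
Qed.

Lemma tblock_inPM (B : BM) m : toeplitzPM M B -> inPM M (tblock B m).
Proof.
move=> [b [Hb HB]]; rewrite (tblockE HB); case: ifP => _ //; exact: inPM0.
Qed.

Lemma Iup_p : Iup p.
Proof.
exists 0; split; first exact: S0.
by exists 1%N; split; [apply/andP; split | rewrite tblock0 mx_root_minpoly].
Qed.

Lemma Idn_p : Idn p.
Proof.
exists 0; split; first exact: S0.
by exists 1%N; split; [apply/andP; split | rewrite tblock0 mx_root_minpoly].
Qed.

Lemma Igen_of I c : I c -> Igen I c.
Proof.
move=> Ic; exists [:: (1, c)]; split; first by move=> x; rewrite inE => /eqP ->.
by rewrite big_seq1 mul1r.
Qed.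

Lemma IgenD I x y : Igen I x -> Igen I y -> Igen I (x + y).
Proof.
move=> [s [Hs ->]] [t [Ht ->]]; exists (s ++ t); split; last by rewrite big_cat.
by move=> z; rewrite mem_cat => /orP [] ?; [apply: Hs | apply: Ht].
Qed.

Lemma IgenM I q x : Igen I x -> Igen I (q * x).
Proof.
move=> [s [Hs ->]]; exists [seq (q * z.1, z.2) | z <- s]; split.
  by move=> z /mapP [w ws ->] /=; apply: Hs.
by rewrite big_map mulr_sumr; apply: eq_bigr => z _; rewrite mulrA.
Qed.

Lemma hM_comm_l X q : inPM M X -> X * hM q = hM q * X.
Proof. by move=> HX; apply: (inPM_comm HX); exists q. Qed.

Lemma div_tblock I s (B : BM) (k : int) :
  (forall c, I c -> s %| c) -> toeplitzPM M B ->
  (forall c, hM c = tblock B k -> I c) ->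
  exists x, tblock B k = hM (s * x).
Proof.
move=> Hs TB HI; have [r Hr] := tblock_inPM k TB.
exists (r %/ s); rewrite divpKC; first by [].
by apply: Hs; apply: HI.
Qed.

Lemma alpha_ex sg : (forall c, Idn c -> sg %| c) ->
  forall s : seq ({poly C} * {poly C}), (forall x, x \in s -> Iup x.2) ->
  exists al, forall B, S B -> forall l : nat, (0 < l < n)%N ->
    hM (\sum_(x <- s) x.1 * x.2) * tblock B (l%:Z - n%:Z) = hM (sg * al) * tblock B l%:Z.
Proof.
move=> Hsg; elim=> [|[q c] s IH] Hs.
  by exists 0 => B SB l hl; rewrite big_nil mulr0 hM0 !mul0r.
have [al Hal] : exists al, forall B, S B -> forall l : nat, (0 < l < n)%N ->
    hM (\sum_(x <- s) x.1 * x.2) * tblock B (l%:Z - n%:Z) = hM (sg * al) * tblock B l%:Z.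
  by apply: IH => x xs; apply: Hs; rewrite inE xs orbT.
have [B0 [SB0 [k [hk Hc]]]] : Iup c by apply: (Hs (q, c)); rewrite inE eqxx.
have [y Hy] := div_tblock (I := Idn) (k := k%:Z - n%:Z) Hsg (Stoep SB0)
  (fun c' H => ex_intro _ B0 (conj SB0 (ex_intro _ k (conj hk H)))).
exists (q * y + al) => B SB l hl.
rewrite big_cons /= hMD mulrDl Hal // hMM -mulrA Hc starS // Hy.
by rewrite mulrA -hMM mulrDr hMD mulrDl; congr (hM _ * _ + _); ring.
Qed.


Definition Ymx (s t : {poly C}) : BM :=
  \matrix_(i, j) ((if (nat_of_ord i == (nat_of_ord j).+1) then hM s else 0) +
                  (if (nat_of_ord i == 0%N) && (nat_of_ord j == n') then hM t else 0)).

Lemma XY_E s t (X : BM) x :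
  (forall i j : 'I_n, X i j = x ((nat_of_ord i)%:Z - (nat_of_ord j)%:Z)) ->
  forall i j : 'I_n, (X *m Ymx s t) i j =
    (if (j.+1 < n)%N then x ((nat_of_ord i)%:Z - (j.+1)%:Z) * hM s else 0) +
    (if nat_of_ord j == n' then x (nat_of_ord i)%:Z * hM t else 0).
Proof.
move=> HX i j; rewrite mxE.
under eq_bigr do rewrite mxE HX mulrDr.
rewrite big_split /=; congr (_ + _).
  case: ifP => hj.
    rewrite (bigD1 (Ordinal hj)) //= eqxx big1 ?addr0 // => u /negbTE hu.
    case: ifP => [/eqP e|]; last by rewrite mulr0.
    exfalso.
    move: hu; have -> : u = Ordinal hj by apply: val_inj.
    by rewrite eqxx.
  apply: big1 => u _; case: ifP => [/eqP e|]; last by rewrite mulr0.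
  by exfalso; have := ltn_ord u; rewrite e hj.
case: ifP => hj.
  rewrite (bigD1 ord0) //= subr0 big1 ?addr0 // => u /negbTE hu.
  case: ifP => [/andP [/eqP e _]|]; last by rewrite mulr0.
  exfalso.
  move: hu; have -> : u = ord0 by apply: val_inj.
  by rewrite eqxx.
by apply: big1 => u _; rewrite andbF mulr0.
Qed.

Lemma YX_E s t (X : BM) x :
  (forall i j : 'I_n, X i j = x ((nat_of_ord i)%:Z - (nat_of_ord j)%:Z)) ->
  forall i j : 'I_n, (Ymx s t *m X) i j =
    (if (0 < i)%N then hM s * x ((i.-1)%:Z - (nat_of_ord j)%:Z) else 0) +
    (if nat_of_ord i == 0%N then hM t * x (n'%:Z - (nat_of_ord j)%:Z) else 0).
Proof.
move=> HX i j; rewrite mxE.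
under eq_bigr do rewrite mxE HX mulrDl.
rewrite big_split /=; congr (_ + _).
  case: ifP => hi.
    have hj : (i.-1 < n)%N by have := ltn_ord i; lia.
    rewrite (bigD1 (Ordinal hj)) //= prednK // eqxx big1 ?addr0 // => u /negbTE hu.
    case: ifP => [/eqP e|]; last by rewrite mul0r.
    exfalso.
    move: hu; have -> : u = Ordinal hj by apply: val_inj => /=; rewrite e.
    by rewrite eqxx.
  apply: big1 => u _; case: ifP => [/eqP e|]; last by rewrite mul0r.
  by exfalso; move: hi; rewrite e.
case: ifP => hi.
  have hj : (n' < n)%N by [].
  rewrite (bigD1 (Ordinal hj)) //= eqxx /= big1 ?addr0 // => u /negbTE hu.
  case: ifP => [/eqP e|]; last by rewrite mul0r.
  exfalso.
  move: hu; have -> : u = Ordinal hj by apply: val_inj.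
    by rewrite eqxx.
by apply: big1 => u _; rewrite mul0r.
Qed.


Lemma Ecomm s t (X : BM) x :
  (forall i j : 'I_n, X i j = x ((nat_of_ord i)%:Z - (nat_of_ord j)%:Z)) ->
  (forall m, inPM M (x m)) ->
  (forall k : nat, (0 < k < n)%N -> hM s * x (k%:Z - n%:Z) = hM t * x k%:Z) ->
  X *m Ymx s t = Ymx s t *m X.
Proof.
move=> HX Hx HE; apply/matrixP => i j; rewrite (XY_E s t HX) (YX_E s t HX).
have hi := ltn_ord i; have hj := ltn_ord j.
have [i0|ipos] := eqVneq (nat_of_ord i) 0%N; have [jn|jn] := eqVneq (nat_of_ord j) n'.
- rewrite i0 jn ltnn /= !add0r.
  have -> : n'%:Z - n'%:Z = 0%N%:Z by lia.
  by rewrite (hM_comm_l _ (Hx _)).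
- rewrite i0 /= addr0 add0r.
  have hjn : (j.+1 < n)%N by lia.
  rewrite hjn; have := HE (n' - j)%N ltac:(lia).
  have -> : (n' - j)%N%:Z - n%:Z = 0%N%:Z - j.+1%:Z by lia.
  have -> : (n' - j)%N%:Z = n'%:Z - j%:Z by lia.
  by move=> <-; rewrite add0r sub0r (hM_comm_l _ (Hx _)).
- rewrite jn ltnn /= lt0n ipos add0r addr0.
  have := HE i ltac:(lia).
  have -> : (nat_of_ord i)%:Z - n%:Z = (i.-1)%:Z - n'%:Z by lia.
  by move=> ->; rewrite (hM_comm_l _ (Hx _)).
- have hjn : (j.+1 < n)%N by lia.
  rewrite hjn lt0n ipos /= !addr0.
  have -> : (nat_of_ord i)%:Z - j.+1%:Z = (i.-1)%:Z - j%:Z by lia.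
  by rewrite (hM_comm_l _ (Hx _)).
Qed.

Lemma commE s t (X : BM) x :
  (forall i j : 'I_n, X i j = x ((nat_of_ord i)%:Z - (nat_of_ord j)%:Z)) ->
  (forall m, inPM M (x m)) ->
  X *m Ymx s t = Ymx s t *m X ->
  (forall k : nat, (0 < k < n)%N -> hM s * x (k%:Z - n%:Z) = hM t * x k%:Z).
Proof.
move=> HX Hx Hc k hk.
have hk' : (k < n)%N by lia.
move/matrixP: Hc => /(_ (Ordinal hk') ord_max).
rewrite (XY_E s t HX) (YX_E s t HX) /= ltnn eqxx add0r.
have -> : (0 < k)%N by lia.
have -> : (k == 0%N) = false by lia.
rewrite addr0 -(hM_comm_l t (Hx k%:Z)) => ->.
by congr (_ * x _); lia.
Qed.


Definition divM (s : {poly C}) (X : 'M[C]_d) := exists x, X = hM (s * x).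

Lemma divMD s X Y : divM s X -> divM s Y -> divM s (X + Y).
Proof. by move=> [x ->] [y ->]; exists (x + y); rewrite mulrDr hMD. Qed.
Lemma divM0 s : divM s 0. Proof. by exists 0; rewrite mulr0 hM0. Qed.
Lemma divM_sum s (F : 'I_n -> 'M[C]_d) :
  (forall t, divM s (F t)) -> divM s (\sum_(t < n) F t).
Proof.
move=> H; elim/big_ind: _ => //; [exact: divM0 | exact: divMD].
Qed.
Lemma divM_mull s X Y : inPM M Y -> divM s X -> divM s (Y * X).
Proof.
by move=> [q ->] [x ->]; exists (q * x); rewrite -hMM mulrCA.
Qed.
Lemma divM_mulr s X Y : inPM M Y -> divM s X -> divM s (X * Y).
Proof.
move=> HY HX; have [x Hx] := HX.
rewrite (inPM_comm (M := M) (Y := Y)) //; first exact: divM_mull.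
by rewrite Hx; exists (s * x).
Qed.

Definition Qset (s sg t : {poly C}) (X : BM) :=
  exists b : int -> 'M[C]_d, (forall m, inPM M (b m)) /\
    (forall i j : 'I_n, X i j = b ((nat_of_ord i)%:Z - (nat_of_ord j)%:Z)) /\
    (forall k : nat, (0 < k < n)%N ->
      [/\ divM s (b k%:Z), divM sg (b (k%:Z - n%:Z)) &
          hM s * b (k%:Z - n%:Z) = hM t * b k%:Z]).

Lemma Q_toep s sg t X : Qset s sg t X -> toeplitzPM M X.
Proof. by move=> [b [Hb [HX _]]]; exists b. Qed.

Lemma Q0 s sg t : Qset s sg t 0.
Proof.
exists (fun _ => 0); split; first by move=> _; exact: inPM0.
split; first by move=> i j; rewrite mxE.
by move=> k hk; split; [exact: divM0 | exact: divM0 | rewrite !mulr0].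
Qed.

Lemma QD s sg t A B : Qset s sg t A -> Qset s sg t B -> Qset s sg t (A + B).
Proof.
move=> [a [Ha [HA Ea]]] [b [Hb [HB Eb]]].
exists (fun m => a m + b m); split; first by move=> m; apply: inPMD.
split; first by move=> i j; rewrite mxE HA HB.
move=> k hk; have [a1 a2 a3] := Ea k hk; have [b1 b2 b3] := Eb k hk.
by split; [exact: divMD | exact: divMD | rewrite !mulrDr a3 b3].
Qed.

Lemma QZ s sg t c A : Qset s sg t A -> Qset s sg t (bscale c A).
Proof.
move=> [a [Ha [HA Ea]]].
exists (fun m => c *: a m); split.
  by move=> m; have [q ->] := Ha m; exists (c *: q); rewrite linearZ.
split; first by move=> i j; rewrite mxE HA.
move=> k hk; have [[x1 e1] [x2 e2] a3] := Ea k hk.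
split.
- by exists (c *: x1); rewrite e1 -scalerAr linearZ.
- by exists (c *: x2); rewrite e2 -scalerAr linearZ.
- by rewrite -!scalerAr a3.
Qed.

Lemma QM s sg t A B : Qset s sg t A -> Qset s sg t B -> Qset s sg t (A *m B).
Proof.
move=> [a [Ha [HA Ea]]] [b [Hb [HB Eb]]].
have star : forall k l : nat, (0 < k < n)%N -> (0 < l < n)%N ->
     a k%:Z * b (l%:Z - n%:Z) = a (k%:Z - n%:Z) * b l%:Z.
  move=> k l hk hl.
  have [[x1 e1] [y1 f1] E1] := Ea k hk; have [[x2 e2] [y2 f2] E2] := Eb l hl.
  rewrite e1 f1 e2 f2 in E1 E2 *.
  have D1 : p %| s * (sg * y1) - t * (s * x1) by apply/hM_eq0; rewrite hMB (hMM s) (hMM t) E1 subrr.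
  have D2 : p %| s * (sg * y2) - t * (s * x2) by apply/hM_eq0; rewrite hMB (hMM s) (hMM t) E2 subrr.
  apply/eqP; rewrite -subr_eq0 -!hMM -hMB; apply/eqP/hM_eq0.
  have -> : s * x1 * (sg * y2) - sg * y1 * (s * x2) =
            x1 * (s * (sg * y2) - t * (s * x2)) - x2 * (s * (sg * y1) - t * (s * x1)) by ring.
  by rewrite dvdp_sub // dvdp_mull.
have HM := mulE HA HB.
have Hc : forall i j : 'I_n, (A *m B) i j = cfun n' a b ((nat_of_ord i)%:Z - (nat_of_ord j)%:Z).
  by move=> i j; rewrite HM (conv_toep star).
have inc : forall m, inPM M (cfun n' a b m).
  by move=> m; rewrite /cfun /conv; case: ifP => _; apply: inPM_sum => u; apply: inPMM (Ha _) (Hb _).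
exists (cfun n' a b); split; first exact: inc.
split; first exact: Hc.
move=> k hk; split.
- rewrite /cfun; have -> : (0 <= k%:Z) = true by lia.
  apply: divM_sum => u; have [u0|upos] := eqVneq (nat_of_ord u) 0%N.
    rewrite u0 subr0; have [e1 _ _] := Ea k hk; exact: divM_mulr.
  have hu : (0 < u < n)%N by rewrite lt0n upos ltn_ord.
  rewrite subr0; have [e1 _ _] := Eb u hu; exact: divM_mull.
- rewrite /cfun; have -> : (0 <= k%:Z - n%:Z) = false by lia.
  apply: divM_sum => u; have [u0|upos] := eqVneq (nat_of_ord u) 0%N.
    rewrite u0; have [_ e2 _] := Eb k hk.
    have -> : 0%N%:Z - - (k%:Z - n%:Z) = k%:Z - n%:Z by lia.
    exact: divM_mull.
  have hu : (0 < n - u < n)%N by have := ltn_ord u; lia.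
  have [_ e2 _] := Ea _ hu.
  have -> : 0%Z - (nat_of_ord u)%:Z = (n - u)%N%:Z - n%:Z by have := ltn_ord u; lia.
  exact: divM_mulr.
- apply: (commE (X := A *m B)) => //.
  rewrite -mulmxA (Ecomm (x := b)) //; last by move=> l hl; have [_ _ ->] := Eb l hl.
  rewrite !mulmxA (Ecomm (x := a)) //; by move=> l hl; have [_ _ ->] := Ea l hl.
Qed.


Lemma beta_ex sp sg al :
  (forall c, Iup c -> sp %| c) ->
  (forall B, S B -> forall l : nat, (0 < l < n)%N ->
     hM sp * tblock B (l%:Z - n%:Z) = hM (sg * al) * tblock B l%:Z) ->
  forall s : seq ({poly C} * {poly C}), (forall x, x \in s -> Idn x.2) ->
  exists X, p %| sp * (\sum_(x <- s) x.1 * x.2) - sg * al * sp * X.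
Proof.
move=> Hsp HE; elim=> [|[q c] s IH] Hs.
  by exists 0; rewrite big_nil !mulr0 subrr dvdp0.
have [X0 HX0] : exists X, p %| sp * (\sum_(x <- s) x.1 * x.2) - sg * al * sp * X.
  by apply: IH => x xs; apply: Hs; rewrite inE xs orbT.
have [B0 [SB0 [k [hk Hc]]]] : Idn c by apply: (Hs (q, c)); rewrite inE eqxx.
have [x Hx] := div_tblock (I := Iup) (k := k%:Z) Hsp (Stoep SB0)
  (fun c' H => ex_intro _ B0 (conj SB0 (ex_intro _ k (conj hk H)))).
have D : p %| sp * c - sg * al * (sp * x).
  apply/hM_eq0; rewrite hMB (hMM sp c) Hc HE // Hx -hMM subrr //.
exists (q * x + X0).
have -> : sp * (\sum_(x <- (q, c) :: s) x.1 * x.2) - sg * al * sp * (q * x + X0) =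
  q * (sp * c - sg * al * (sp * x)) + (sp * (\sum_(x <- s) x.1 * x.2) - sg * al * sp * X0).
  by rewrite big_cons /=; ring.
by rewrite dvdp_add // dvdp_mull.
Qed.

Lemma upper_all sp : (forall c, Iup c -> sp %| c) -> p %| sp -> forall B, S B -> upperB B.
Proof.
move=> Hsp hp B SB i hi.
have [b [Hb HB]] := Stoep SB.
have := tblockE HB i; case: ifP => hr; last by [].
have [k ek] : exists k : nat, i = k%:Z by exists (absz i); lia.
subst i; move=> E; have [r Hr] := tblock_inPM k%:Z (Stoep SB).
have : Iup r by exists B; split => //; exists k; split => //; lia.
move/Hsp => /(dvdp_trans hp) /hM_eq0 h0; by rewrite Hr.
Qed.

Lemma lower_all sg : (forall c, Idn c -> sg %| c) -> p %| sg -> forall B, S B -> lowerB B.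
Proof.
move=> Hsg hp B SB i hi.
have [b [Hb HB]] := Stoep SB.
have := tblockE HB i; case: ifP => hr; last by [].
have [k ek] : exists k : nat, i = k%:Z - n%:Z by exists (absz (i + n%:Z)); lia.
subst i; move=> E; have [r Hr] := tblock_inPM (k%:Z - n%:Z) (Stoep SB).
have : Idn r by exists B; split => //; exists k; split => //; lia.
move/Hsg => /(dvdp_trans hp) /hM_eq0 h0; by rewrite Hr.
Qed.


Lemma main_sec :
  (forall j : int, 1 <= `|j| < n%:Z -> exists B, S B /\ tblock B j != 0) /\
  (exists splus sminus : {poly C},
    (forall j : int, 1 <= j < n%:Z -> is_sgcd M S j splus) /\
    (forall j : int, - n%:Z < j <= -1 -> is_sgcd M S j sminus) /\
    (forall B, S B -> forall j : int, 1 <= j < n%:Z ->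
       exists bt : {poly C}, tblock B j = horner_mx M (splus * bt)) /\
    (forall B, S B -> forall j : int, - n%:Z < j <= -1 ->
       exists bt : {poly C}, tblock B j = horner_mx M (sminus * bt)) /\
    (exists A, S A /\
       (forall j : int, 1 <= j < n%:Z ->
          exists ta : {poly C}, tblock A j = horner_mx M (splus * ta)
                                /\ coprimep ta (mxminpoly M)) /\
       (forall j : int, - n%:Z < j <= -1 ->
          exists ta : {poly C}, tblock A j = horner_mx M (sminus * ta)
                                /\ coprimep ta (mxminpoly M))) /\
    (splus * sminus %| mxminpoly M)).
Proof.
have p0 : p != 0 by apply: monic_neq0; exact: mxminpoly_monic.
have [sp [sp_monic sp_in sp_dvd]] :=
  ideal_gen p0 (Igen_of Iup_p) (@IgenD Iup) (@IgenM Iup).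
have [sm [sm_monic sm_in sm_dvd]] :=
  ideal_gen p0 (Igen_of Idn_p) (@IgenD Idn) (@IgenM Idn).
have Hsp : forall c, Iup c -> sp %| c by move=> c /Igen_of; apply: sp_dvd.
have Hsm : forall c, Idn c -> sm %| c by move=> c /Igen_of; apply: sm_dvd.
have sp_p : sp %| p by apply: Hsp; exact: Iup_p.
have sm_p : sm %| p by apply: Hsm; exact: Idn_p.
have sp0 : sp != 0 by apply: monic_neq0.
have sm0 : sm != 0 by apply: monic_neq0.
have pq0 : p %/ sp != 0.
  rewrite divp_eq0 (negbTE p0) (negbTE sp0) /= -leqNgt.
  exact: dvdp_leq.
pose G := gcdp sm (p %/ sp).
have G0 : G != 0 by rewrite gcdp_eq0 negb_and sm0.
have lG0 : lead_coef G != 0 by rewrite lead_coef_eq0.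
pose sg := (lead_coef G)^-1 *: G.
have sg_monic : sg \is monic by exact: monic_normalize.
have sg0 : sg != 0 by apply: monic_neq0.
have sg_sm : sg %| sm by rewrite dvdpZl ?invr_eq0 // dvdp_gcdl.
have sg_pq : sg %| p %/ sp by rewrite dvdpZl ?invr_eq0 // dvdp_gcdr.
have Hsg : forall c, Idn c -> sg %| c by move=> c /Hsm; apply: dvdp_trans.
have [s [Hs Es]] := sp_in.
have [al Hal] := alpha_ex Hsg Hs.
rewrite -Es in Hal.
pose g := (p %/ sp) %/ sg.
pose e := sm %/ sg.
have Hp : p = sp * sg * g.
  by rewrite /g -{1}(divpK sp_p) -{1}(divpK sg_pq); ring.
have He : sm = e * sg by rewrite /e divpK.
have cop_eg : coprimep e g.
  rewrite /e /g /sg !divpZr ?invr_eq0 // invrK coprimepZl // coprimepZr //.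
  by apply: coprimep_div_gcd; rewrite sm0.
have [t [Ht Et]] := sm_in.
have [X HX] := beta_ex Hsp Hal Ht.
rewrite -Et He in HX.
have spsg0 : sp * sg != 0 by rewrite mulf_neq0.
have hg : g %| e - al * X.
  rewrite -(dvdp_mul2l _ _ spsg0) -Hp.
  by have -> : sp * sg * (e - al * X) = sp * (e * sg) - sg * al * sp * X by ring.
have cop_ag : coprimep al g by apply: coprime_trans cop_eg hg.
have [c Hc] := choose_c p0 cop_ag.
pose al' := al + c%:P * g.
have cop' : coprimep al' p := Hc.
pose Q := Qset sp sg (sg * al).
have SQ : forall B, S B -> Q B.
  move=> B SB; have [b [Hb HB]] := Stoep SB.
  exists b; split => //; split => //.
  move=> k hk.
  have t1 := tblockE HB k%:Z; have t2 := tblockE HB (k%:Z - n%:Z).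
  rewrite (rng_pos hk) in t1; rewrite (rng_neg hk) in t2.
  split.
  - have [r Hr] := Hb k%:Z; exists (r %/ sp); rewrite divpKC //.
    apply: Hsp; exists B; split => //; exists k; split => //; by rewrite t1 /= Hr.
  - have [r Hr] := Hb (k%:Z - n%:Z); exists (r %/ sg); rewrite divpKC //.
    apply: Hsg; exists B; split => //; exists k; split => //; by rewrite t2 /= Hr.
  - by have := Hal B SB k hk; rewrite t1 t2.
have QS : forall B, Q B -> S B.
  case: HS => _ _ Hmax; apply: Hmax => //.
  - by split; [exact: Q0 | exact: QD | exact: QZ | exact: QM].
  - by move=> B; apply: Q_toep.
pose a0 := fun m : int => if (0 < m) && (m < n%:Z) then hM sp
  else if (- n%:Z < m) && (m < 0) then hM (sg * al') else 0.
pose A0 : BM := \matrix_(i, j) a0 ((nat_of_ord i)%:Z - (nat_of_ord j)%:Z).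
have HA0 : forall i j : 'I_n, A0 i j = a0 ((nat_of_ord i)%:Z - (nat_of_ord j)%:Z).
  by move=> i j; rewrite mxE.
have SA0 : S A0.
  apply: QS; exists a0; split.
    move=> m; rewrite /a0; case: ifP => _; first exact: inPM_h.
    case: ifP => _; [exact: inPM_h | exact: inPM0].
  split => // k hk.
  have -> : a0 k%:Z = hM sp by rewrite /a0 (rng_pos2 hk).
  have -> : a0 (k%:Z - n%:Z) = hM (sg * al').
    by rewrite /a0 (rng_neg2 hk) (rng_neg3 hk).
  split.
  - by exists 1; rewrite mulr1.
  - by exists al'.
  - apply/eqP; rewrite -subr_eq0 -!hMM -hMB; apply/eqP/hM_eq0.
    have -> : sp * (sg * al') - sg * al * sp = c%:P * (sp * sg * g) by rewrite /al'; ring.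
    by rewrite -Hp dvdp_mull.
have tA0p : forall k : int, 1 <= k < n%:Z -> tblock A0 k = hM sp.
  move=> k hk; rewrite (tblockE HA0) (jp1 hk).
  by rewrite /a0 (jp2 hk).
have tA0m : forall k : int, - n%:Z < k <= -1 -> tblock A0 k = hM (sg * al').
  move=> k hk; rewrite (tblockE HA0) (jm1 hk).
  by rewrite /a0 (jm2 hk) (jm2' hk).
have hsp0 : hM sp != 0.
  apply/eqP => /hM_eq0 h; case: Hgen => H _; apply: H; exact: upper_all Hsp h.
have hsg0 : hM (sg * al') != 0.
  apply/eqP => /hM_eq0 h; case: Hgen => _ H; apply: H; apply: (lower_all Hsg).
  by rewrite -(Gauss_dvdpl _ (q := al')) // coprimep_sym.
split.
  move=> j hj; exists A0; split => //.
  by case: (jabs hj) => h; [rewrite tA0p | rewrite tA0m].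
exists sp, sg; split.
  move=> j hj; split => //.
  - move=> B b SB Hb; apply: Hsp; exists B; split => //.
    have [h1 h2] := jp3 hj; exists (absz j); split => //; by rewrite h2.
  - move=> u _ Hu; apply: (Hu A0) => //; by rewrite tA0p.
split.
  move=> j hj; split => //.
  - exact: dvdp_trans sg_pq (divp_dvd sp_p).
  - move=> B b SB Hb; apply: Hsg; exists B; split => //.
    have [h1 h2] := jm3 hj; exists (absz (j + n%:Z)); split => //; by rewrite h2.
  - move=> u up Hu; have := Hu A0 (sg * al') SA0 (esym (tA0m j hj)).
    rewrite Gauss_dvdpl //; rewrite coprimep_sym; exact: coprimep_dvdl up cop'.
split.
  move=> B SB j hj; have [r Hr] := tblock_inPM j (Stoep SB).
  exists (r %/ sp); rewrite divpKC //; apply: Hsp; exists B; split => //.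
  have [h1 h2] := jp3 hj; exists (absz j); split => //; by rewrite h2 Hr.
split.
  move=> B SB j hj; have [r Hr] := tblock_inPM j (Stoep SB).
  exists (r %/ sg); rewrite divpKC //; apply: Hsg; exists B; split => //.
  have [h1 h2] := jm3 hj; exists (absz (j + n%:Z)); split => //; by rewrite h2 Hr.
split.
  exists A0; split => //; split.
    by move=> j hj; exists 1; rewrite mulr1 tA0p // coprime1p.
  by move=> j hj; exists al'; rewrite tA0m.
by rewrite Hp dvdp_mulr.
Qed.

End Main.

Theorem lemma7p2 (C : numClosedFieldType) (n d' : nat) (M : 'M[C]_d'.+1)
  (S : 'M['M[C]_d'.+1]_n -> Prop) :
  (2 <= n)%N -> nonderogatory M -> maximal_subalgebra M S -> generic S ->
  (* (i) *)
  (forall j : int, 1 <= `|j| < n%:Z -> exists B, S B /\ tblock B j != 0) /\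
  (exists splus sminus : {poly C},
    (* (ii) *)
    (forall j : int, 1 <= j < n%:Z -> is_sgcd M S j splus) /\
    (forall j : int, - n%:Z < j <= -1 -> is_sgcd M S j sminus) /\
    (forall B, S B -> forall j : int, 1 <= j < n%:Z ->
       exists bt : {poly C}, tblock B j = horner_mx M (splus * bt)) /\
    (forall B, S B -> forall j : int, - n%:Z < j <= -1 ->
       exists bt : {poly C}, tblock B j = horner_mx M (sminus * bt)) /\
    (* (iii) *)
    (exists A, S A /\
       (forall j : int, 1 <= j < n%:Z ->
          exists ta : {poly C}, tblock A j = horner_mx M (splus * ta)
                                /\ coprimep ta (mxminpoly M)) /\
       (forall j : int, - n%:Z < j <= -1 ->
          exists ta : {poly C}, tblock A j = horner_mx M (sminus * ta)
                                /\ coprimep ta (mxminpoly M))) /\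
    (* (iv) *)
    (splus * sminus %| mxminpoly M)).
Proof.
case: n S => [|n'] S hn _ HS Hgen; first by [].
have Hn : (0 < n')%N by [].
exact: (main_sec HS Hgen Hn).
Qed.
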